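(* Let $\mathcal{S}$ be finite, $\Pi$ irreducible stochastic on $\mathcal{S}$, $\kappa(x,y):=\pi_{xy}-\mathbf{1}_{x=y}$, $\mathcal{K}=\Pi-\mathrm{I}$, $Q=(q(y))$ the invariant distribution, and assume detailed balance $q(y)\kappa(y,z)=q(z)\kappa(z,y)$ for all $y,z$. Let $\boldsymbol{\ell}_t=\ell(t,\cdot)$, $\ell(t,y):=p(t,y)/q(y)$, where $p(t,\cdot)$ is the time-$t$ law of the chain with generator $\mathcal{K}$ started from a positive initial distribution. Fix $t_0>0$, $\varepsilon>0$, a continuous curve $(\psi_t)_{t_0\le t<t_0+\varepsilon}$ of functions $\mathcal{S}\to\mathbb{R}$, and let $\ell^\psi$ solve $\ell^\psi_{t_0}=\boldsymbol{\ell}_{t_0}$, $\partial_t\ell^\psi(t,x)=\sum_y\widehat\kappa(x,y)\psi(t,y)$ with $\widehat\kappa(x,y):=q(y)\kappa(y,x)/q(x)$. Then for every $t\in[t_0,t_0+\varepsilon)$, $$\lim_{h\downarrow0}\frac1h\big\|\boldsymbol{\ell}_{t+h}-\boldsymbol{\ell}_t\big\|_{\mathbb{H}^{-1}(\mathcal{S},Q)}=\big\|\mathcal{K}\boldsymbol{\ell}_t\big\|_{\mathbb{H}^{-1}(\mathcal{S},Q)}=\big\|\boldsymbol{\ell}_t\big\|_{\mathbb{H}^1(\mathcal{S},Q)},$$ and $$\lim_{h\downarrow0}\frac1h\big\|\ell^\psi_{t+h}-\ell^\psi_t\big\|_{\mathbb{H}^{-1}(\mathcal{S},Q)}=\big\|\mathcal{K}\psi_t\big\|_{\mathbb{H}^{-1}(\mathcal{S},Q)}=\big\|\psi_t\big\|_{\mathbb{H}^1(\mathcal{S},Q)}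 .$$
   Context: $\nabla f(x,y):=f(y)-f(x)$; $\mathcal{Z}:=\{(x,y):\kappa(x,y)>0\}$, $c(x,y):=\frac12\kappa(x,y)q(x)$, $\|F\|^2_{\mathbb{L}^2(\mathcal{Z},C)}:=\sum_{(x,y)\in\mathcal{Z}}c(x,y)F(x,y)^2$. $\|f\|_{\mathbb{H}^1(\mathcal{S},Q)}:=\|\nabla f\|_{\mathbb{L}^2(\mathcal{Z},C)}$ (equal to $\mathcal{E}(f,f)^{1/2}$, $\mathcal{E}(f,g):=-\sum_yq(y)f(y)(\mathcal{K}g)(y)$). $\|f\|_{\mathbb{H}^{-1}(\mathcal{S},Q)}:=\|\nabla g\|_{\mathbb{L}^2(\mathcal{Z},C)}$ for any $g$ with $\mathcal{K}g=f$ if $f\in\mathrm{Range}(\mathcal{K})$, and $+\infty$ otherwise. *)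

(* Defs.v *)
From HB Require Import structures.
From mathcomp Require Import all_boot all_order all_algebra.
From mathcomp Require Import all_classical all_reals all_analysis.
Set Implicit Arguments. Unset Strict Implicit. Unset Printing Implicit Defensive.
Import Order.TTheory GRing.Theory Num.Theory.
Import numFieldNormedType.Exports.
Local Open Scope classical_set_scope.
Local Open Scope ring_scope.

Section Defs.
Variables (R : realType) (S : finType).

Definition stochastic_mx (Pi : S -> S -> R) : Prop :=
  (forall x y, 0 <= Pi x y) /\ (forall x, \sum_y Pi x y = 1).

Fixpoint npow (Pi : S -> S -> R) (n : nat) (x y : S) : R :=
  match n with
  | O => (x == y)%:R
  | m.+1 => \sum_z npow Pi m x z * Pi z y
  end.

Definition irreducible_chain (Pi : S -> S -> R) : Prop :=
  forall x y, exists n : nat, 0 < npow Pi n x y.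

Definition is_distr (q : S -> R) : Prop :=
  (forall y, 0 <= q y) /\ \sum_y q y = 1.

Definition invariant_distr (Pi : S -> S -> R) (q : S -> R) : Prop :=
  forall y, \sum_x q x * Pi x y = q y.

Definition kappa (Pi : S -> S -> R) (x y : S) : R := Pi x y - (x == y)%:R.

Definition Kop (Pi : S -> S -> R) (f : S -> R) : S -> R :=
  fun x => \sum_y kappa Pi x y * f y.

Definition kappa_hat (Pi : S -> S -> R) (q : S -> R) (x y : S) : R :=
  q y * kappa Pi y x / q x.

Definition cZ (Pi : S -> S -> R) (q : S -> R) (x y : S) : R :=
  2^-1 * kappa Pi x y * q x.

(* ||F||_{L^2(Z,C)} with Z = {(x,y) : kappa(x,y) > 0} *)
Definition L2Z (Pi : S -> S -> R) (q : S -> R) (F : S -> S -> R) : R :=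
  Num.sqrt (\sum_x \sum_(y | 0 < kappa Pi x y) cZ Pi q x y * F x y ^+ 2).

Definition grad (f : S -> R) : S -> S -> R := fun x y => f y - f x.

Definition H1norm (Pi : S -> S -> R) (q : S -> R) (f : S -> R) : R :=
  L2Z Pi q (grad f).

Definition Hm1norm (Pi : S -> S -> R) (q : S -> R) (f : S -> R) : \bar R :=
  match pselect (exists g, Kop Pi g = f) with
  | left e => (L2Z Pi q (grad (projT1 (cid e))))%:E
  | right _ => +oo%E
  end.

End Defs.

(* Main.v *)
Require Import Defs.
From HB Require Import structures.
From mathcomp Require Import all_boot all_order all_algebra.
From mathcomp Require Import all_classical all_reals all_analysis.
From mathcomp Require Import ring lra zify.
Import Order.TTheory GRing.Theory Num.Theory.
Import numFieldNormedType.Exports.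
Local Open Scope classical_set_scope.
Local Open Scope ring_scope.

Section Alg.
Variables (R : realType) (S : finType) (Pi : S -> S -> R) (q : S -> R).
Hypothesis stoch : stochastic_mx Pi.
Hypothesis irr : irreducible_chain Pi.

Lemma npow_ge0 n x y : 0 <= npow Pi n x y.
Proof.
elim: n x y => [|n IH] x y /=; first by rewrite ler0n.
by apply: sumr_ge0 => z _; apply: mulr_ge0 => //; case: stoch.
Qed.

Lemma kappa_sum x : \sum_y kappa Pi x y = 0.
Proof.
rewrite /kappa sumrB; case: stoch => _ ->.
by rewrite (bigD1 x) //= eqxx big1 ?addr0 ?subrr // => y /negbTE; rewrite eq_sym => ->.
Qed.

Lemma KopE0 v x : Kop Pi v x = \sum_y Pi x y * v y - v x.
Proof.
rewrite /Kop /kappa. under eq_bigr do rewrite mulrBl. rewrite sumrB.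
congr (_ - _). rewrite (bigD1 x) //= eqxx mul1r big1 ?addr0 // => y /negbTE.
by rewrite eq_sym => ->; rewrite mul0r.
Qed.

Lemma Kop_ker v : (forall x, Kop Pi v x = 0) -> forall x y, v x = v y.
Proof.
move=> hv.
have harm x : v x = \sum_y Pi x y * v y.
  by apply/eqP; rewrite eq_sym -subr_eq0 -KopE0 hv.
suff key x0 : (forall z, v z <= v x0) -> forall y, v y = v x0.
  move=> x y.
  have [m hm] : exists m, forall z, v z <= v m.
    case: (@Order.TotalTheory.arg_maxP _ _ S x predT v isT) => m _ hm.
    by exists m => z; apply: hm.
  by rewrite (key m hm x) (key m hm y).
move=> hmax y; have [n hn] := irr x0 y.
elim: n y hn => [|n IH] y /=.
  by case: eqP => [->|]; rewrite ?ltxx.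
move=> hs.
have /existsP [z hz] : [exists z, 0 < npow Pi n x0 z * Pi z y].
  apply: contraTT hs; rewrite negb_exists => /forallP h.
  by rewrite -leNgt; apply: sumr_le0 => z _; rewrite leNgt h.
have hz1 : 0 < npow Pi n x0 z.
  rewrite lt_def npow_ge0 andbT; apply/negP => /eqP h0; move: hz; by rewrite h0 mul0r ltxx.
have hz2 : 0 < Pi z y.
  rewrite lt_def; case: stoch => -> _; rewrite andbT; apply/negP => /eqP h0; move: hz; by rewrite h0 mulr0 ltxx.
have vz := IH z hz1.
have e : \sum_w Pi z w * (v x0 - v w) = 0.
  under eq_bigr do rewrite mulrBr. rewrite sumrB -mulr_suml; case: stoch => _ ->.
  by rewrite mul1r -harm vz subrr.
have h0 : forall w, true -> 0 <= Pi z w * (v x0 - v w).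
  by move=> w _; apply: mulr_ge0; [case: stoch | rewrite subr_ge0].
have := @psumr_eq0P _ _ predT _ h0 e y isT; move=> /eqP.
by rewrite mulf_eq0 gt_eqF //= subr_eq0 => /eqP ->.
Qed.


Definition Amx : 'M[R]_#|S| := \matrix_(i, j) kappa Pi (enum_val j) (enum_val i).
Definition f2r (g : S -> R) : 'rV[R]_#|S| := \row_i g (enum_val i).
Definition r2f (u : 'rV[R]_#|S|) : S -> R := fun x => u 0 (enum_rank x).
Definition Gm (f : S -> R) : S -> R := r2f (f2r f *m pinvmx Amx).

Lemma sumS (F : S -> R) : \sum_(x : S) F x = \sum_(i < #|S|) F (enum_val i).
Proof.
rewrite (reindex (fun i : 'I_#|S| => enum_val i)) //=.
by exists enum_rank => x _; [exact: enum_valK | exact: enum_rankK].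
Qed.

Lemma r2fK g : r2f (f2r g) = g.
Proof. by apply: funext => x; rewrite /r2f /f2r mxE enum_rankK. Qed.

Lemma f2rK u : f2r (r2f u) = u.
Proof. by apply/rowP => i; rewrite /r2f /f2r mxE enum_valK. Qed.

Lemma KopE u : Kop Pi (r2f u) = r2f (u *m Amx).
Proof.
apply: funext => x; rewrite /Kop /r2f !mxE sumS.
by apply: eq_bigr => i _; rewrite mxE enum_rankK enum_valK mulrC.
Qed.

Lemma Kop_sub_mx g : (f2r (Kop Pi g) <= Amx)%MS.
Proof. by rewrite -{1}(r2fK g) KopE f2rK submxMl. Qed.

Lemma Gm_spec f : (exists g, Kop Pi g = f) -> Kop Pi (Gm f) = f.
Proof.
case=> g <-; rewrite /Gm KopE mulmxKpV ?r2fK //; exact: Kop_sub_mx.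
Qed.

Lemma ker_const : (kermx Amx <= (const_mx 1 : 'rV[R]_#|S|))%MS.
Proof.
apply/row_subP => i.
have h : row i (kermx Amx) *m Amx = 0.
  by apply/sub_kermxP; exact: row_sub.
set u := row i (kermx Amx) in h *.
have hk : forall x, Kop Pi (r2f u) x = 0.
  by move=> x; rewrite KopE h /r2f mxE.
case: (posnP #|S|) => [c0|cpos].
  have -> : u = 0 by apply/rowP => j; exfalso; have := ltn_ord j; lia.
  by rewrite sub0mx.
set x0 := enum_val (Ordinal cpos).
have -> : u = u 0 (enum_rank x0) *: const_mx 1.
  apply/rowP => j; rewrite [RHS]mxE [X in _ * X]mxE mulr1.
  have := Kop_ker _ hk (enum_val j) x0; rewrite /r2f enum_valK. idtac.
  by move=> ->.
by rewrite scalemx_sub.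
Qed.

Lemma rankA : (#|S| - 1 <= \rank Amx)%N.
Proof.
have h1 := mxrankS ker_const.
rewrite mxrank_ker in h1.
have h2 : (\rank (const_mx 1%R : 'rV[R]_#|S|) <= 1)%N by rewrite rank_leq_row.
lia.
Qed.

Lemma qkappa x : invariant_distr Pi q -> \sum_y q y * kappa Pi y x = 0.
Proof.
move=> qinv; rewrite /kappa.
under eq_bigr do rewrite mulrBr. rewrite sumrB qinv.
rewrite (bigD1 x) //= eqxx mulr1 big1 ?addr0 ?subrr // => y /negbTE ->.
by rewrite mulr0.
Qed.

Lemma range_sum f : is_distr q -> invariant_distr Pi q ->
  \sum_x q x * f x = 0 -> exists g, Kop Pi g = f.
Proof.
move=> [q0 q1] qinv hf.
set qc : 'cV[R]_#|S| := \col_i q (enum_val i).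
set w := f2r f.
have Aq : Amx *m qc = 0.
  apply/colP => i; rewrite !mxE.
  under eq_bigr do rewrite !mxE.
  rewrite -(sumS (fun y => kappa Pi y (enum_val i) * q y)).
  under eq_bigr do rewrite mulrC.
  exact: qkappa.
have wq : w *m qc = 0.
  apply/rowP => i; rewrite !mxE.
  transitivity (\sum_x q x * f x); last exact: hf.
  rewrite sumS; by apply: eq_bigr => j _; rewrite !mxE mulrC.
set B := col_mx Amx w.
have Bq : B *m qc = 0 by rewrite mul_col_mx Aq wq col_mx0.
have qc0 : qc^T != 0.
  apply/negP => /eqP h; move: q1; rewrite sumS.
  have -> : \sum_(i < #|S|) q (enum_val i) = 0.
    by apply: big1 => i _; move/rowP: h => /(_ i); rewrite !mxE.
  by move/eqP; rewrite eq_sym oner_eq0.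
have hk : (qc^T <= kermx B^T)%MS.
  by apply/sub_kermxP; rewrite -trmx_mul Bq trmx0.
have := mxrankS hk; rewrite mxrank_ker rank_rV qc0 mxrank_tr => hB.
have AB : (Amx <= B)%MS.
  have -> : Amx = row_mx 1%:M 0 *m B by rewrite mul_row_col mul1mx mul0mx addr0.
  exact: submxMl.
have := mxrank_leqif_sup AB.
move=> /leqifP; case: ifP => [BA _|_].
  move: BA; rewrite col_mx_sub => /andP[_ wA].
  exists (r2f (w *m pinvmx Amx)).
  by rewrite KopE mulmxKpV // /w r2fK.
have := rankA; lia.
Qed.

Lemma Kop_lin g h : Kop Pi (fun x => g x - h x) = fun x => Kop Pi g x - Kop Pi h x.
Proof.
apply: funext => x; rewrite /Kop -sumrB; apply: eq_bigr => y _; by rewrite mulrBr.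
Qed.

Lemma H1_indep g g' : Kop Pi g = Kop Pi g' -> H1norm Pi q g = H1norm Pi q g'.
Proof.
move=> e.
have hk : forall x, Kop Pi (fun x => g x - g' x) x = 0.
  by move=> x; rewrite Kop_lin e subrr.
have hg : grad g = grad g'.
  apply: funext => x; apply: funext => y; rewrite /grad.
  have := Kop_ker _ hk y x; lra.
by rewrite /H1norm hg.
Qed.

Lemma Hm1_eq g f : Kop Pi g = f -> Hm1norm Pi q f = (H1norm Pi q g)%:E.
Proof.
move=> e; rewrite /Hm1norm; case: pselect => [ex|nex]; last by exfalso; apply: nex; exists g.
case: cid => g0 /= h0; congr (_%:E).
by apply: H1_indep; rewrite h0 e.
Qed.

End Alg.
Arguments Gm {R S} Pi f _.
Arguments Amx {R S} Pi.
Arguments f2r {R S} g.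
Arguments r2f {R S} u _.


Section Ana.
Variables (R : realType) (S : finType) (Pi : S -> S -> R) (q : S -> R).
Hypothesis stoch : stochastic_mx Pi.
Hypothesis irr : irreducible_chain Pi.

Lemma npow_inv n y : invariant_distr Pi q -> \sum_x q x * npow Pi n x y = q y.
Proof.
move=> qinv; elim: n y => [|n IH] y /=.
  rewrite (bigD1 y) //= eqxx mulr1 big1 ?addr0 // => x /negbTE ->; by rewrite mulr0.
under eq_bigr do rewrite mulr_sumr.
rewrite exchange_big /= -[RHS]qinv; apply: eq_bigr => z _.
by rewrite -IH mulr_suml; apply: eq_bigr => x _; rewrite mulrA.
Qed.

Lemma q_pos y : is_distr q -> invariant_distr Pi q -> 0 < q y.
Proof.
move=> [q0 q1] qinv.
have [x0 hx0] : exists x0, 0 < q x0.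
  apply/not_existsP => h.
  have : \sum_x q x = 0 by apply: big1 => x _; apply/eqP; rewrite eq_le q0 andbT leNgt; apply/negP => /(h x).
  by rewrite q1 => /eqP; rewrite oner_eq0.
have [n hn] := irr x0 y.
rewrite -(npow_inv n y qinv) (bigD1 x0) //=.
apply: (lt_le_trans (mulr_gt0 hx0 hn)); rewrite lerDl.
by apply: sumr_ge0 => x _; apply: mulr_ge0 => //; exact: npow_ge0.
Qed.

Lemma cvg_sumR {T} (F : set_system T) {FF : Filter F} (I : finType) (P : pred I)
  (Ff : I -> T -> R) (Fa : I -> R) :
  (forall i, P i -> Ff i x @[x --> F] --> Fa i) ->
  \sum_(i | P i) Ff i x @[x --> F] --> \sum_(i | P i) Fa i.
Proof. by move=> h; apply: cvg_big => //; exact: add_continuous. Qed.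

Lemma Gm_scale a f : Gm Pi (fun x => a * f x) = fun x => a * Gm Pi f x.
Proof.
apply: funext => x; rewrite /Gm /r2f.
have -> : f2r (fun x => a * f x) = a *: f2r f by apply/rowP => i; rewrite !mxE.
by rewrite -scalemxAl mxE.
Qed.

Lemma H1_scale a g : 0 <= a -> H1norm Pi q (fun x => a * g x) = a * H1norm Pi q g.
Proof.
move=> a0; rewrite /H1norm /L2Z /grad.
have -> : \sum_x \sum_(y | 0 < kappa Pi x y) cZ Pi q x y * (a * g y - a * g x) ^+ 2
  = a ^+ 2 * \sum_x \sum_(y | 0 < kappa Pi x y) cZ Pi q x y * (g y - g x) ^+ 2.
  rewrite mulr_sumr; apply: eq_bigr => x _; rewrite mulr_sumr; apply: eq_bigr => y _.
  rewrite -mulrBr exprMn; ring.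
by rewrite sqrtrM ?sqr_ge0 // sqrtr_sqr ger0_norm.
Qed.

Lemma Gm_cvg {T} (F : set_system T) {FF : Filter F} (fh : T -> S -> R) f :
  (forall x, fh t x @[t --> F] --> f x) ->
  H1norm Pi q (Gm Pi (fh t)) @[t --> F] --> H1norm Pi q (Gm Pi f).
Proof.
move=> hf.
have hG : forall y, Gm Pi (fh t) y @[t --> F] --> Gm Pi f y.
  move=> y; rewrite /Gm /r2f.
  have e : forall g : S -> R, (f2r g *m pinvmx (Amx Pi)) 0 (enum_rank y)
     = \sum_i g (enum_val i) * pinvmx (Amx Pi) i (enum_rank y).
    by move=> g; rewrite mxE; apply: eq_bigr => i _; rewrite mxE.
  rewrite e; under eq_cvg do rewrite e.
  apply: cvg_sumR => i _; apply: cvgM; [exact: hf | exact: cvg_cst].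
rewrite /H1norm /L2Z /grad.
set Q := fun g : S -> R => \sum_x \sum_(y | 0 < kappa Pi x y) cZ Pi q x y * (g y - g x) ^+ 2.
have H : Q (Gm Pi (fh t)) @[t --> F] --> Q (Gm Pi f).
  apply: cvg_sumR => x _; apply: cvg_sumR => y _.
  apply: cvgM; first exact: cvg_cst.
  rewrite expr2; apply: cvgM; apply: cvgB; exact: hG.
have hc := @sqrt_continuous R (Q (Gm Pi f)).
exact: (continuous_cvg FF hc H).
Qed.

Lemma key (F : R -> S -> R) t (phi : S -> R) :
  is_distr q -> invariant_distr Pi q ->
  (forall x, h^-1 * (F (t+h) x - F t x) @[h --> 0^'+] --> Kop Pi phi x) ->
  (\forall h \near 0^'+, \sum_x q x * (F (t+h) x - F t x) = 0) ->
  (((h^-1)%:E * Hm1norm Pi q (fun y => F (t+h) y - F t y)%R)%E @[h --> 0^'+]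
     --> Hm1norm Pi q (Kop Pi phi))
  /\ Hm1norm Pi q (Kop Pi phi) = (H1norm Pi q phi)%:E.
Proof.
move=> qd qinv hd hs; split; last exact: Hm1_eq.
have e1 : Kop Pi (Gm Pi (Kop Pi phi)) = Kop Pi phi by apply: (@Gm_spec R S Pi); exists phi.
rewrite (@Hm1_eq R S Pi q stoch irr _ _ e1).
apply: (@cvg_trans _ ((fun h =>
   (H1norm Pi q (Gm Pi (fun y => h^-1 * (F (t+h) y - F t y))))%:E) @ 0^'+)).
  apply: near_eq_cvg.
  move: (nbhs_right_gt (0:R)) hs; apply: filterS2 => h hpos hsum /=.
  have ex := @range_sum R S Pi q stoch irr _ qd qinv hsum.
  have e2 := @Gm_spec R S Pi _ ex.
  by rewrite (@Hm1_eq R S Pi q stoch irr _ _ e2) Gm_scale H1_scale ?invr_ge0 ?ltW // EFinM.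
apply: cvg_EFin; first by apply: filterE.
exact: (@Gm_cvg _ _ _ (fun h y => h^-1 * (F (t+h) y - F t y)) _ hd).
Qed.

Lemma diffq (f : R -> R) (t df : R) : is_derive t (1:R) f df ->
  h^-1 * (f (t+h) - f t) @[h --> 0^'+] --> df.
Proof.
move=> hd; apply: cvg_dnbhs_at_right.
have hc : derivable f t 1 := ex_derive.
have hv : derive f t 1 = df := derive_val.
rewrite -hv.
have e : forall h : R, h^-1 *: ((f \o shift t) (h *: 1) - f t) = h^-1 * (f (t+h) - f t).
  by move=> h; rewrite /= [_%:A]mulr1 (addrC h t).
rewrite -(eq_cvg _ _ e); exact: hc.
Qed.

Lemma sum_is_derive_seq (I : Type) (r : seq I) (c : I -> R) (F : R -> I -> R) (t : R) (d : I -> R) :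
  (forall i, is_derive t (1:R) (F^~ i) (d i)) ->
  is_derive t (1:R) (fun s => \sum_(i <- r) c i * F s i) (\sum_(i <- r) c i * d i).
Proof.
move=> hd; elim: r => [|a r IH].
  have -> : (fun s => \sum_(i <- [::]) c i * F s i) = cst 0.
    by apply: funext => s; rewrite big_nil.
  rewrite big_nil; exact: is_derive_cst.
have -> : (fun s => \sum_(i <- a :: r) c i * F s i)
   = (c a \*: (F^~ a)) + (fun s => \sum_(i <- r) c i * F s i).
  by apply: funext => s; rewrite big_cons.
rewrite big_cons; apply: is_deriveD => //; exact: is_deriveZ.
Qed.

Lemma mvt_const (f : R -> R) (a b : R) : a < b ->
  (forall x : R, a < x < b -> is_derive x (1:R) f 0) ->
  {within `[a, b], continuous f} -> f a = f b.
Proof.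
move=> ab hd hc.
have hd' : forall x, x \in `]a, b[ -> is_derive x 1 f ((fun _ : R => (0:R)) x).
  by move=> x; rewrite in_itv /= => /hd.
have [c _ e] := MVT ab hd' hc.
by move: e; rewrite mul0r => /eqP; rewrite subr_eq0 => /eqP.
Qed.

Lemma zero_of_cvg (d l : R) : (fun h => h^-1 * d) @ 0^'+ --> l -> d = 0.
Proof.
move=> hl.
have h1 : (fun h : R => h * (h^-1 * d)) @ 0^'+ --> 0 * l.
  apply: cvgM => //; apply: cvg_at_right_filter; exact: cvg_id.
have hn : {near 0^'+, (fun _ => d) =1 (fun h : R => h * (h^-1 * d))}.
  by apply: filterS (nbhs_right_gt 0) => h hpos; rewrite mulrA mulfV ?gt_eqF // mul1r.
have h2 : (fun h : R => h * (h^-1 * d)) @ 0^'+ --> d.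
  exact: (cvg_trans (near_eq_cvg hn) (cvg_cst d)).
rewrite mul0r in h1; exact: (cvg_unique _ h2 h1).
Qed.

End Ana.

Theorem proposition6p5 (R : realType) (S : finType)
  (Pi : S -> S -> R) (q : S -> R) (p0 : S -> R) (p : R -> S -> R)
  (t0 eps : R) (psi : R -> S -> R) (lpsi : R -> S -> R) :
  stochastic_mx Pi -> irreducible_chain Pi ->
  is_distr q -> invariant_distr Pi q ->
  (forall y z, q y * kappa Pi y z = q z * kappa Pi z y) ->
  (* positive initial distribution *)
  (forall y, 0 < p0 y) -> \sum_y p0 y = 1 ->
  (* p(t,.) = law at time t of the chain with generator K started from p0:
     forward Kolmogorov equation with initial condition p0 *)
  (forall y, p 0 y = p0 y) ->
  (forall y, p t y @[t --> 0^'+] --> p0 y) ->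
  (forall (t : R) (y : S), 0 < t ->
     is_derive t 1 (fun s => p s y) (\sum_x p t x * kappa Pi x y)) ->
  0 < t0 -> 0 < eps ->
  (* continuous curve psi on [t0, t0 + eps) *)
  (forall x, {within `[t0, t0 + eps[%classic, continuous (fun t => psi t x)}) ->
  (* l^psi solves the ODE on [t0, t0+eps) with l^psi_{t0} = l_{t0} *)
  (forall x, lpsi t0 x = p t0 x / q x) ->
  (forall x, (h^-1 * (lpsi (t0 + h) x - lpsi t0 x)) @[h --> 0^'+] -->
             \sum_y kappa_hat Pi q x y * psi t0 y) ->
  (forall (t : R) (x : S), t0 < t < t0 + eps ->
     is_derive t 1 (fun s => lpsi s x) (\sum_y kappa_hat Pi q x y * psi t y)) ->
  forall t : R, t0 <= t < t0 + eps ->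
    let ell := fun s y => p s y / q y in
    ((((h^-1)%:E * Hm1norm Pi q (fun y => ell (t + h) y - ell t y)%R)%E
        @[h --> 0^'+] --> Hm1norm Pi q (Kop Pi (ell t)))
     /\ Hm1norm Pi q (Kop Pi (ell t)) = (H1norm Pi q (ell t))%:E)
    /\
    ((((h^-1)%:E * Hm1norm Pi q (fun y => lpsi (t + h) y - lpsi t y)%R)%E
        @[h --> 0^'+] --> Hm1norm Pi q (Kop Pi (psi t)))
     /\ Hm1norm Pi q (Kop Pi (psi t)) = (H1norm Pi q (psi t))%:E).
Proof.
move=> stoch irr qd qinv db p0pos p0sum p00 pcont pder t0pos epspos psicont
  lpsi0 lpsider0 lpsider t /andP[ht0 ht1] ell.
have qpos : forall y, 0 < q y by move=> y; exact: (@q_pos R S Pi q stoch irr y qd qinv).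
have qne : forall y, q y != 0 by move=> y; rewrite gt_eqF.
have kxy : forall x y, kappa Pi x y = q y * kappa Pi y x / q x.
  by move=> x y; rewrite db mulrAC divff ?qne // mul1r.
have khat : forall x y, kappa_hat Pi q x y = kappa Pi x y.
  by move=> x y; rewrite /kappa_hat -kxy.
have tpos : 0 < t by apply: lt_le_trans ht0.
split.
  apply: (@key R S Pi q stoch irr) => //.
    move=> x.
    have e : Kop Pi (ell t) x = (\sum_y p t y * kappa Pi y x) / q x.
      rewrite /Kop /ell mulr_suml; apply: eq_bigr => y _.
      rewrite (kxy x y); field; apply/andP; split; exact: qne.
    rewrite e (@eq_cvg _ _ _ _ (fun h => h^-1 * (p (t+h) x - p t x) / q x)).
      have := cvgM (@diffq R (fun s => p s x) t _ (pder t x tpos)) (cvg_cst (q x)^-1); exact.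
    by move=> h; rewrite /ell -mulrBl mulrA.
  apply: filterS (nbhs_right_gt 0) => h hpos.
  have -> : \sum_x q x * (ell (t + h) x - ell t x) = \sum_x p (t+h) x - \sum_x p t x.
    rewrite -sumrB; apply: eq_bigr => x _; rewrite /ell -mulrBl mulrC mulfVK //.
  apply/eqP; rewrite subr_eq0; apply/eqP; apply/esym.
  have pd : forall s : R, 0 < s -> is_derive s (1:R) (fun s => \sum_x 1 * p s x) 0.
    move=> s spos.
    apply: (is_derive_eq (@sum_is_derive_seq R _ (index_enum S) (fun _ => 1) p s _ (fun x => pder s x spos))).
    under eq_bigr do rewrite mul1r.
    rewrite exchange_big /=; apply: big1 => y _.
    by rewrite -mulr_sumr (kappa_sum _ _ _ stoch) mulr0.
  have pd' : forall s : R, 0 < s -> is_derive s (1:R) (fun s => \sum_x p s x) 0.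
    move=> s spos.
    have -> : (fun s => \sum_x p s x) = (fun s => \sum_x 1 * p s x).
      by apply: funext => u; under [RHS]eq_bigr do rewrite mul1r.
    exact: pd.
  apply: (@mvt_const R (fun s => \sum_x p s x) t (t+h)).
  - by rewrite ltrDl.
  - move=> s /andP[s1 _]; apply: pd'; exact: lt_trans s1.
  - apply: derivable_within_continuous => s; rewrite in_itv /= => /andP[s1 _].
    have [] := pd' s (lt_le_trans tpos s1) => + _; exact.
apply: (@key R S Pi q stoch irr) => //.
  move=> x.
  have e : Kop Pi (psi t) x = \sum_y kappa_hat Pi q x y * psi t y.
    by rewrite /Kop; apply: eq_bigr => y _; rewrite khat.
  rewrite e; case/boolP: (t0 == t) => [/eqP <-|tne]; first exact: lpsider0.
  have tt0 : t0 < t by rewrite lt_neqAle tne ht0.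
  have hx : t0 < t < t0 + eps by rewrite tt0 ht1.
  exact: (@diffq R (fun s => lpsi s x) t _ (lpsider t x hx)).
set g := fun s => \sum_x q x * lpsi s x.
have gd : forall s : R, t0 < s < t0 + eps -> is_derive s (1:R) g 0.
  move=> s hs.
  apply: (is_derive_eq (@sum_is_derive_seq R _ (index_enum S) q lpsi s _ (fun x => lpsider s x hs))).
  under eq_bigr do rewrite mulr_sumr.
  rewrite exchange_big /=; apply: big1 => y _.
  have -> : \sum_x q x * (kappa_hat Pi q x y * psi s y) = (\sum_x q x * kappa Pi x y) * psi s y.
    by rewrite mulr_suml; apply: eq_bigr => x _; rewrite khat mulrA.
  by rewrite (qkappa _ _ _ _ _ qinv) mul0r.
have gc : forall a b : R, t0 < a -> a < b -> b < t0 + eps -> g a = g b.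
  move=> a b ha hab hb; apply: mvt_const => //.
    move=> s /andP[s1 s2]; apply: gd; by rewrite (lt_trans ha s1) (lt_trans s2 hb).
  apply: derivable_within_continuous => s; rewrite in_itv /= => /andP[s1 s2].
  have hs' : t0 < s < t0 + eps by rewrite (lt_le_trans ha s1) (le_lt_trans s2 hb).
  by case: (gd s hs').
have gc' : forall a b : R, t0 < a < t0 + eps -> t0 < b < t0 + eps -> g a = g b.
  move=> a b /andP[a1 a2] /andP[b1 b2]; case: (ltgtP a b) => [ab|ba|->] //.
    exact: gc.
  apply/esym; exact: gc.
have mid : t0 < t0 + eps / 2 < t0 + eps by apply/andP; split; lra.
have gt : g t = g (t0 + eps / 2).
  case/boolP: (t0 == t) => [/eqP <- | tne]; last first.
    have tt0 : t0 < t by rewrite lt_neqAle tne ht0.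
    apply: gc' => //; by rewrite tt0 ht1.
  set d := g (t0 + eps / 2) - g t0.
  have L : (fun h => h^-1 * (g (t0 + h) - g t0)) @ 0^'+ -->
      \sum_x q x * (\sum_y kappa_hat Pi q x y * psi t0 y).
    rewrite (@eq_cvg _ _ _ _ (fun h => \sum_x q x * (h^-1 * (lpsi (t0 + h) x - lpsi t0 x)))).
      apply: cvg_sumR => x _; apply: cvgM; [exact: cvg_cst | exact: lpsider0].
    by move=> h; rewrite /g -sumrB mulr_sumr; apply: eq_bigr => x _; rewrite -mulrBr mulrCA.
  have L2 : (fun h => h^-1 * d) @ 0^'+ --> \sum_x q x * (\sum_y kappa_hat Pi q x y * psi t0 y).
    apply: (cvg_trans _ L); apply: near_eq_cvg.
    move: (nbhs_right_gt (0:R)) (nbhs_right_lt epspos); apply: filterS2 => h h1 h2 /=.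
    rewrite /d (gc' (t0 + h) (t0 + eps / 2)) //; apply/andP; split; lra.
  move: (@zero_of_cvg R _ _ L2); rewrite /d => /eqP; rewrite subr_eq0 => /eqP ->.
  done.
have hlt : 0 < t0 + eps - t by rewrite subr_gt0.
move: (nbhs_right_gt (0:R)) (nbhs_right_lt hlt); apply: filterS2 => h h1 h2 /=.
have -> : \sum_x q x * (lpsi (t + h) x - lpsi t x) = g (t + h) - g t.
  by rewrite /g -sumrB; apply: eq_bigr => x _; rewrite mulrBr.
rewrite gt (gc' (t + h) (t0 + eps / 2)) ?subrr //; apply/andP; split; lra.
Qed.
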